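(* Let $G$ be a finite graph with irreducible components $G_1,\dots,G_m$, and let $X$ be its graph C*-correspondence over $A=C(G^{(0)})$. Then for every tracial state $\tau$ of $A$, \[h_X^\tau=\max\{\log\lambda_{G_s}:G_s\text{ is communicated by some vertex }v\text{ with }\tau(p_v)\neq0\}.\]
   Context: $G$ is a finite directed graph with vertex set $G^{(0)}=\{v_1,\dots,v_n\}$, edge set $G^{(1)}$, source and range maps $s,r$; adjacency matrix $G_{ij}=\#\{e:s(e)=v_i,r(e)=v_j\}$. $A=C(G^{(0)})$ is spanned by orthogonal projections $p_v$, $v\in G^{(0)}$; tracial states of $A$ correspond to probability vectors $(\tau(p_{v}))_v$. The graph C*-correspondence $X$ is spanned over $A$ by vectors $x_e$, $e\in G^{(1)}$, with $\langle x_e,x_f\rangle=\delta_{e,f}p_{s(f)}$, $p_vx_e=\delta_{v,r(e)}x_e$, $x_ep_v=\delta_{s(e),v}x_e$; $\{x_e\}$ is a unit decomposition ($\sum_e\theta_{x_e,x_e}=1_X$). For words $\mu=\mu_k\cdots\mu_1$ in edges, $x_\mu=x_{\mu_k}\otimes\cdots\otimes x_{\mu_1}$. $h_X^\tau=\limsup_k k^{-1}\log\sum_{|\mu|=k}\tau(\langle x_\mu,x_\mu\rangle)$, with the convention that this is $0$ if the terms are eventually $0$. Irreducible components: the maximal strongly connected vertex classes, ordered so that $G$ is block upper triangular with irreducible diagonal blocks $G_1,\dots,G_m$ (a vertex on no cycle gives a component $[0]$). $\lambda_{G_s}$ is the spectral radius of $G_s$ ($0$ for $[0]$). $G_s$ is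 communicated by a vertex $v$ if there is a path (possibly of length $0$) starting at $v$ and ending at a vertex of $G_s$. Convention: $\log 0:=0$. *)

(* Defs.v *)
From HB Require Import structures.
From mathcomp Require Import all_boot all_order all_algebra.
From mathcomp Require Import all_classical all_reals all_analysis.
From mathcomp Require Import complex.
Set Implicit Arguments. Unset Strict Implicit. Unset Printing Implicit Defensive.
Import Order.TTheory GRing.Theory Num.Theory.
Local Open Scope ring_scope.

Section GraphCorr.
Variables (R : realType) (V E : finType) (s r : E -> V).

(* Elements of A = C(G^(0)) are functions V -> R; p_v = indicator of v. *)
Definition proj (v : V) : V -> R := fun w => (v == w)%:R.

(* For a in A and an edge f: <x_f, a . x_f> = a(r f) p_{s f}
   (from p_v x_f = delta_{v,r f} x_f and <x_f,x_f> = p_{s f}), and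
   <x_f (x) y, a (x_f (x) y)> = <y, <x_f, a x_f> y> (interior tensor product).
   [ip_word a mu] = <x_mu, a . x_mu>, with mu = [:: mu_k; ...; mu_1]
   (head of the list = outermost tensor factor mu_k). *)
Fixpoint ip_word (a : V -> R) (mu : seq E) : V -> R :=
  match mu with
  | [::] => a
  | f :: nu => ip_word (fun v => a (r f) * proj (s f) v) nu
  end.

Definition ip_self (mu : seq E) : V -> R := ip_word (fun _ => 1) mu.

(* A state of A = C(V) given by a probability vector t = (tau(p_v))_v. *)
Definition is_prob_vector (t : V -> R) : Prop :=
  (forall v, 0 <= t v) /\ \sum_v t v = 1.

Definition state_eval (t : V -> R) (a : V -> R) : R := \sum_v t v * a v.

Definition word_sum (t : V -> R) (k : nat) : R :=
  \sum_(mu : k.-tuple E) state_eval t (ip_self mu).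

(* h_X^tau = limsup_k k^{-1} log(...); with ln 0 = 0 (mathcomp convention),
   eventually-zero terms give 0, matching the paper's convention. *)
Definition entropy (t : V -> R) : \bar R :=
  limn_esup (fun k : nat => ((k%:R)^-1 * ln (word_sum t k))%:E).

Definition adj : rel V := fun v w => [exists f : E, (s f == v) && (r f == w)].
Definition reach (v w : V) : bool := connect adj v w.

(* The irreducible component (maximal strongly connected class) of u;
   a vertex on no cycle gives a singleton component with matrix [0]. *)
Definition component (u : V) : {set V} := [set w | reach u w && reach w u].

Definition sub_adj (C : {set V}) : 'M[R]_#|C| :=
  \matrix_(i, j) (#|[set f : E | (s f == enum_val i) && (r f == enum_val j)]|)%:R.

End GraphCorr.

(* Spectral radius of a real square matrix: the largest modulus of a complex
   root of its characteristic polynomial (0 for the empty matrix). *)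
Definition spectral_radius (R : realType) (n : nat) (M : 'M[R]_n) : R :=
  \big[Num.max/0]_(z <- sval (closed_field_poly_normal
                    (char_poly (map_mx (real_complex R) M))))
     ComplexField.Normc.normc z.

(* "G_s is communicated by v": a path from v to a vertex of G_s. *)
Definition communicated (V E : finType) (s r : E -> V) (C : {set V}) (v : V) : bool :=
  [exists w in C, reach s r v w].

(* Main.v *)
Require Import Defs.
From HB Require Import structures.
From mathcomp Require Import all_boot all_order all_algebra.
From mathcomp Require Import all_classical all_reals all_analysis.
From mathcomp Require Import complex.
From mathcomp Require Import ring lra.
Import Order.TTheory GRing.Theory Num.Theory.
Import numFieldNormedType.Exports.
Local Open Scope ring_scope.
From mathcomp Require Import zify.
Set Implicit Arguments. Unset Strict Implicit. Unset Printing Implicit Defensive.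
Local Open Scope complex_scope.
Section PartA.
Variable R : realType.
Local Notation C := (R[i]).
Local Notation nc := (@ComplexField.Normc.normc R).

Lemma nc_ge0 (x : C) : 0 <= nc x.
Proof. by case: x => a b; rewrite /= sqrtr_ge0. Qed.

Lemma ncX (x : C) k : nc (x ^+ k) = nc x ^+ k.
Proof.
elim: k => [|k IH]; first by rewrite !expr0 ComplexField.Normc.normc1.
by rewrite !exprS ComplexField.Normc.normcM IH.
Qed.

Lemma nc_sum (I : Type) (r : seq I) (F : I -> C) :
  nc (\sum_(i <- r) F i) <= \sum_(i <- r) nc (F i).
Proof.
elim: r => [|a r IH]; first by rewrite !big_nil ComplexField.Normc.normc0.
rewrite !big_cons; apply: le_trans (le_normcD _ _) _.
by rewrite lerD2l.
Qed.

Lemma nc_real (a : R) : nc (a%:C) = `|a|.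
Proof. by rewrite /= expr0n /= addr0 sqrtr_sqr. Qed.

Lemma geo_step (a b : nat -> C) (z : C) (mu K : R) :
  nc z < mu -> (forall k, nc (b k) <= K * mu ^+ k) ->
  (forall k, a k.+1 = z * a k + b k) ->
  exists K', forall k, nc (a k) <= K' * mu ^+ k.
Proof.
move=> zmu hb ha.
set zeta := nc z.
have z0 : 0 <= zeta by apply: nc_ge0.
have mu0 : 0 < mu by apply: le_lt_trans zmu.
have d0 : 0 < mu - zeta by rewrite subr_gt0.
have K0 : 0 <= K by have := hb 0%N; rewrite expr0 mulr1; apply: le_trans (nc_ge0 _).
have main : forall k, nc (a k) <= nc (a 0%N) * zeta ^+ k + K * (mu ^+ k - zeta ^+ k) / (mu - zeta).
  elim=> [|k IH]; first by rewrite !expr0 subrr mulr0 mul0r addr0 mulr1.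
  rewrite ha; apply: le_trans (le_normcD _ _) _.
  rewrite ComplexField.Normc.normcM -/zeta.
  apply: le_trans (lerD (ler_wpM2l z0 IH) (hb k)) _.
  rewrite le_eqVlt; apply/orP; left; apply/eqP; rewrite !exprS; field.
  by rewrite lt0r_neq0.
exists (nc (a 0%N) + K / (mu - zeta)) => k.
apply: le_trans (main k) _.
have zk : zeta ^+ k <= mu ^+ k by rewrite lerXn2r // ?ltW // nnegrE ltW.
rewrite mulrDl lerD //; first by rewrite ler_wpM2l // nc_ge0.
rewrite mulrAC; apply: ler_wpM2l; first by rewrite divr_ge0 // ltW.
by rewrite lerBlDr lerDl exprn_ge0.
Qed.

Lemma comm_lin n (M : 'M[C]_n.+1) (a b : C) : GRing.comm (M - a%:M) (M - b%:M).
Proof.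
have hc : forall (A : 'M[C]_n.+1) c, GRing.comm A c%:M.
  by move=> A c; rewrite /GRing.comm -!mulmxE scalar_mxC.
apply: commrB; last exact: hc.
apply: commr_sym; apply: commrB; [exact: commr_refl | exact: hc].
Qed.

Lemma mat_bound n (M : 'M[C]_n.+1) (mu : R) (zs : seq C) :
  (forall z, z \in zs -> nc z < mu) ->
  forall (X : 'M[C]_n.+1), (\prod_(z <- zs) (M - z%:M)) * X = 0 ->
  forall i j, exists K, forall k, nc ((M ^+ k * X) i j) <= K * mu ^+ k.
Proof.
elim: zs => [|z zs IH] hz X.
  rewrite big_nil mul1r => -> i j; exists 0 => k.
  by rewrite mulr0 mxE ComplexField.Normc.normc0 mul0r.
rewrite big_cons => hX i j.
set Y := (M - z%:M) * X.
have hY : (\prod_(z <- zs) (M - z%:M)) * Y = 0.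
  rewrite /Y mulrA.
  have -> : (\prod_(z0 <- zs) (M - z0%:M)) * (M - z%:M) = (M - z%:M) * \prod_(z0 <- zs) (M - z0%:M).
    apply/esym; apply: commr_prod => w _; exact: comm_lin.
  by [].
have [K hK] := IH (fun w hw => hz w (mem_behead (s:=z :: zs) hw)) Y hY i j.
apply: (@geo_step (fun k => (M ^+ k * X) i j) (fun k => (M ^+ k * Y) i j) z mu K).
- by apply: hz; rewrite mem_head.
- exact: hK.
- move=> k /=.
  have -> : M ^+ k.+1 * X = z *: (M ^+ k * X) + M ^+ k * Y.
    have e1 : z%:M * X = z *: X by rewrite -mulmxE mul_scalar_mx.
    rewrite /Y mulrBl mulrBr e1 scalerAr mulrA -exprSr.
    by rewrite addrC subrK.
  by rewrite !mxE.
Qed.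

Definition rts n (M : 'M[C]_n) := sval (closed_field_poly_normal (char_poly M)).
Arguments rts {n} M.

Lemma char_poly_rts n (M : 'M[C]_n) : char_poly M = \prod_(z <- rts M) ('X - z%:P).
Proof.
rewrite /rts; case: (closed_field_poly_normal _) => zs /= e.
by rewrite {1}e (monicP (char_poly_monic _)) scale1r.
Qed.

Lemma gelfand n (M : 'M[C]_n.+1) (mu : R) :
  (forall z, z \in rts M -> nc z < mu) ->
  forall i j, exists K, forall k, nc ((M ^+ k) i j) <= K * mu ^+ k.
Proof.
move=> hz i j.
have [|K hK] := @mat_bound n M mu (rts M) hz 1%R _ i j; last first.
  by exists K => k; have := hK k; rewrite mulr1.
rewrite mulr1; have := Cayley_Hamilton M; rewrite char_poly_rts rmorph_prod /=.
move=> <-; apply: eq_bigr => z _.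
by rewrite rmorphB /= horner_mx_X horner_mx_C.
Qed.

Lemma char_poly_tr (F : fieldType) n (A : 'M[F]_n) : char_poly A^T = char_poly A.
Proof.
rewrite /char_poly -det_tr; congr (\det _); apply/matrixP => i j.
by rewrite !mxE eq_sym.
Qed.

Lemma eig_lower n (A : 'M[C]_n.+1) z : z \in rts A ->
  exists i, forall k, nc z ^+ k <= \sum_j nc ((A ^+ k) i j).
Proof.
move=> zin.
have : eigenvalue A^T z.
  by rewrite eigenvalue_root_char char_poly_tr char_poly_rts root_prod_XsubC.
move=> /eigenvalueP [v hv vn0].
have hvk : forall k, v *m (A ^+ k)^T = z ^+ k *: v.
  elim=> [|k IH]; first by rewrite expr0 trmx1 mulmx1 expr0 scale1r.
  rewrite exprSr -mulmxE trmx_mul mulmxA hv -scalemxAl IH scalerA.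
  by rewrite -exprS.
pose i := [arg max_(i > ord0) nc (v 0 i)]%O.
have imax : forall j, nc (v 0 j) <= nc (v 0 i).
  rewrite /i; case: arg_maxP => // i0 _ h j; exact: h.
have vi0 : 0 < nc (v 0 i).
  have [j vj] : exists j, v 0 j != 0.
    apply/existsP; move: vn0; apply: contraR; rewrite negb_exists => /forallP h.
    apply/eqP/matrixP => a b; rewrite (ord1 a) mxE; exact/eqP/negPn/h.
  apply: lt_le_trans (imax j); rewrite lt_neqAle nc_ge0 andbT eq_sym.
  by apply: contra vj => /eqP /ComplexField.Normc.eq0_normc ->.
exists i => k.
have e : z ^+ k * v 0 i = \sum_j v 0 j * (A ^+ k) i j.
  have := congr1 (fun M : 'rV[C]_n.+1 => M 0 i) (hvk k); rewrite !mxE => <-.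
  by apply: eq_bigr => j _; rewrite mxE.
have : nc z ^+ k * nc (v 0 i) <= (\sum_j nc ((A ^+ k) i j)) * nc (v 0 i).
  rewrite -ncX -ComplexField.Normc.normcM e; apply: le_trans (nc_sum _ _) _.
  rewrite mulr_suml; apply: ler_sum => j _.
  rewrite ComplexField.Normc.normcM mulrC ler_wpM2l ?nc_ge0 //.
by rewrite ler_pM2r.
Qed.
End PartA.
Section Comb.
Variables (V E : finType) (s r : E -> V).
Local Open Scope nat_scope.

Fixpoint Pm k (v w : V) : nat :=
  match k with 0 => (v == w : nat) | k'.+1 => \sum_(f | r f == w) Pm k' v (s f) end.

Lemma Pm_fwd k v w : Pm k.+1 v w = \sum_(f | s f == v) Pm k (r f) w.
Proof.
elim: k w => [|k IH] w.
  rewrite /= big_mkcond [RHS]big_mkcond /=; apply: eq_bigr => f _.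
  by rewrite [v == s f]eq_sym; case: (r f == w); case: (s f == v).
have -> : Pm k.+2 v w = \sum_(g | r g == w) Pm k.+1 v (s g) by [].
under eq_bigr => g _ do rewrite IH.
by rewrite exchange_big.
Qed.

Definition P k v := \sum_w Pm k v w.

Lemma P0 v : P 0 v = 1.
Proof.
rewrite /P (bigD1 v) //= eqxx big1 // => w /negbTE; by rewrite eq_sym => ->.
Qed.

Lemma PS k v : P k.+1 v = \sum_(f | s f == v) P k (r f).
Proof.
rewrite /P; under eq_bigr => w _ do rewrite Pm_fwd.
by rewrite exchange_big.
Qed.

Variable C : {set V}.

Fixpoint Q k (v u : V) : nat :=
  match k with 0 => (v == u : nat) | k'.+1 => \sum_(f | (s f == v) && (r f \in C)) Q k' (r f) u end.

Definition X m u := \sum_(f | (s f == u) && (r f \notin C)) P m (r f).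

Lemma sum_eq1 (F : V -> nat) v : \sum_u (v == u) * F u = F v.
Proof.
rewrite (bigD1 v) //= eqxx mul1n big1 ?addn0 // => w /negbTE; by rewrite eq_sym => ->.
Qed.

Lemma exit_dec k v : P k v = \sum_u Q k v u + \sum_(j < k) \sum_u Q j v u * X (k.-1 - j) u.
Proof.
elim: k v => [|k IH] v.
  by rewrite P0 big_ord0 addn0 /= (eq_bigr (fun u => (v == u) * 1)) ?sum_eq1 // => u _; rewrite muln1.
rewrite PS (bigID (fun f => r f \in C)) /=.
under eq_bigr => f _ do rewrite IH.
rewrite big_split /= big_ord_recl /= sum_eq1 subn0.
rewrite exchange_big /=.
rewrite -!addnA; congr (_ + _); rewrite addnC; congr (_ + _).
rewrite exchange_big /=; apply: eq_bigr => j _.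
rewrite exchange_big /=; apply: eq_bigr => u _.
rewrite -big_distrl /=; congr (_ * X _ _).
rewrite /bump /=; lia.
Qed.

Lemma Q_out k w u : w \in C -> u \notin C -> Q k w u = 0.
Proof.
elim: k w => [|k IH] w wC uC /=.
  by case: eqP => // ewu; move: uC; rewrite -ewu wC.
by rewrite big1 // => f /andP [_ rC]; apply: IH.
Qed.

Lemma Q_le_P k w : \sum_u Q k w u <= P k w.
Proof.
elim: k w => [|k IH] w.
  by rewrite P0 (eq_bigr (fun u => (w == u) * 1)) ?sum_eq1 // => u _; rewrite muln1.
rewrite PS (bigID (fun f => r f \in C)) /= exchange_big /=.
apply: leq_trans (leq_addr _ _); apply: leq_sum => f _; exact: IH.
Qed.


Lemma P_reach v w : reach s r v w -> exists d, forall k, P k w <= P (d + k) v.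
Proof.
move=> /connectP [p]; elim: p v => [|x p IH] v /=.
  by move=> _ ->; exists 0.
move=> /andP [hx hp] ew; have [d hd] := IH x hp ew.
exists d.+1 => k; apply: leq_trans (hd k) _.
rewrite addSn PS; move: hx => /existsP [f /andP [/eqP sf /eqP rf]].
by rewrite (bigD1 f) ?sf //= rf leq_addr.
Qed.

Lemma reach_edge f : reach s r (s f) (r f).
Proof. by apply: connect1; apply/existsP; exists f; rewrite !eqxx. Qed.

Lemma reach_trans u v w : reach s r u v -> reach s r v w -> reach s r u w.
Proof. exact: connect_trans. Qed.

Lemma reach_refl v : reach s r v v.
Proof. exact: connect0. Qed.

Lemma comp_in u : u \in component s r u.
Proof. by rewrite inE reach_refl. Qed.

End Comb.

Section WS.
Variables (R : realType) (V E : finType) (s r : E -> V).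

Lemma tuple_sum_cons (F : seq E -> R) k :
  \sum_(mu : k.+1.-tuple E) F mu = \sum_f \sum_(nu : k.-tuple E) F (f :: nu).
Proof.
rewrite pair_big /=.
rewrite (reindex (fun p : E * k.-tuple E => [tuple of p.1 :: p.2])) /=; last first.
  exists (fun mu : k.+1.-tuple E => (thead mu, [tuple of behead mu])).
    by case=> f nu _; congr pair; apply: val_inj.
  by move=> mu _; rewrite [in RHS](tuple_eta mu).
by apply: eq_bigr.
Qed.

Lemma ip_sum k (a : V -> R) v :
  \sum_(mu : k.-tuple E) ip_word s r a mu v = \sum_w (Pm s r k v w)%:R * a w.
Proof.
elim: k a => [|k IH] a.
  rewrite (eq_bigr (fun _ => a v)); last by move=> mu _; rewrite (tuple0 mu).
  rewrite sumr_const card_tuple expn0 mulr1n.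
  by rewrite (bigD1 v) //= eqxx mul1r big1 ?addr0 // => w /negbTE; rewrite eq_sym => ->; rewrite mul0r.
rewrite (tuple_sum_cons (fun mu => ip_word s r a mu v)) /=.
under eq_bigr => f _ do rewrite IH.
have -> : \sum_f \sum_w (Pm s r k v w)%:R * (a (r f) * Defs.proj R (s f) w)
   = \sum_f (Pm s r k v (s f))%:R * a (r f).
  apply: eq_bigr => f _; rewrite (bigD1 (s f)) //= /Defs.proj eqxx mulr1 big1 ?addr0 //.
  by move=> w /negbTE; rewrite eq_sym /Defs.proj => ->; rewrite mulr0 mulr0.
under [RHS]eq_bigr => w _ do rewrite natr_sum mulr_suml.
rewrite (partition_big r xpredT) //=; apply: eq_bigr => w _.
by apply: eq_big => // f /eqP ->.
Qed.

Lemma ws_P (t : V -> R) k : word_sum s r t k = \sum_v t v * (P s r k v)%:R.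
Proof.
rewrite /word_sum /state_eval exchange_big /=; apply: eq_bigr => v _.
rewrite -mulr_sumr /ip_self ip_sum /P natr_sum; congr (_ * _).
by apply: eq_bigr => w _; rewrite mulr1.
Qed.
End WS.

Section Comp.
Variables (R : realType) (V E : finType) (s r : E -> V).
Local Notation C := (R[i]).
Local Notation nc := (@ComplexField.Normc.normc R).

Lemma gelfand_any n (M : 'M[C]_n) (mu : R) :
  (forall z, z \in rts M -> nc z < mu) ->
  forall i j, exists K, forall k, nc ((M ^+ k) i j) <= K * mu ^+ k.
Proof. case: n M => [|n] M hz i; first by case: i. exact: gelfand. Qed.

Lemma eig_lower_any n (A : 'M[C]_n) z : z \in rts A ->
  exists i, forall k, nc z ^+ k <= \sum_j nc ((A ^+ k) i j).
Proof.
case: n A => [|n] A; last exact: eig_lower.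
rewrite -root_prod_XsubC -char_poly_rts /char_poly det_mx00.
by rewrite (negbTE (root1 _)).
Qed.

Definition Mc (Cs : {set V}) := map_mx (real_complex R) (sub_adj R s r Cs).
Definition rho (Cs : {set V}) := spectral_radius (sub_adj R s r Cs).

Lemma rhoE Cs : rho Cs = \big[Num.max/0]_(z <- rts (Mc Cs)) nc z.
Proof. by []. Qed.

Lemma rho_ge0 Cs : 0 <= rho Cs.
Proof.
rewrite rhoE; elim: (rts _) => [|z l IH]; rewrite ?big_nil ?big_cons //.
by rewrite le_max IH orbT.
Qed.

Lemma rho_root Cs z : z \in rts (Mc Cs) -> nc z <= rho Cs.
Proof. by move=> hz; rewrite rhoE; apply: le_bigmax_seq. Qed.

Lemma rho_att Cs : rho Cs != 0 -> exists2 z, z \in rts (Mc Cs) & nc z = rho Cs.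
Proof.
rewrite rhoE; elim: (rts _) => [|z l IH]; rewrite ?big_nil ?eqxx // big_cons.
have [h|h] := leP (nc z) (\big[Num.max/0]_(j <- l) nc j).
  move=> /IH [w wl e]; exists w => //; by rewrite in_cons wl orbT.
by move=> _; exists z; rewrite ?mem_head.
Qed.

Lemma sub_adjX (Cs : {set V}) k (i j : 'I_#|Cs|) :
  ((sub_adj R s r Cs) ^+ k) i j = (Q s r Cs k (enum_val i) (enum_val j))%:R.
Proof.
elim: k i j => [|k IH] i j.
  by rewrite expr0 mxE /= (inj_eq enum_val_inj); case: (i == j).
rewrite exprS -mulmxE mxE.
under eq_bigr => l _ do rewrite IH mxE.
have -> : Q s r Cs k.+1 (enum_val i) (enum_val j) =
  (\sum_(f | (s f == enum_val i) && (r f \in Cs)) Q s r Cs k (r f) (enum_val j))%N by [].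
rewrite (partition_big r (fun x => x \in Cs)) /=; last by move=> f /andP [].
rewrite natr_sum [RHS]big_enum_val /=; apply: eq_bigr => l _.
rewrite (eq_bigr (fun _ => Q s r Cs k (enum_val l) (enum_val j))); last first.
  by move=> f /andP [_ /eqP ->].
rewrite sum_nat_const natrM; congr (_ * _).
congr (_ %:R); apply: eq_card => f; rewrite !inE.
rewrite unfold_in /=; case: (r f =P enum_val l) => [->|]; by rewrite ?enum_valP ?andbT ?andbF.
Qed.

Lemma map_mxX' n (M : 'M[R]_n) k : (map_mx (real_complex R) M) ^+ k = map_mx (real_complex R) (M ^+ k).
Proof.
elim: k => [|k IH]; first by rewrite !expr0 map_mx1.
by rewrite !exprS IH -!mulmxE map_mxM.
Qed.

Lemma nc_Mc (Cs : {set V}) k (i j : 'I_#|Cs|) :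
  nc (((Mc Cs) ^+ k) i j) = (Q s r Cs k (enum_val i) (enum_val j))%:R.
Proof.
by rewrite /Mc map_mxX' mxE sub_adjX nc_real ger0_norm.
Qed.


Lemma comp_upper (Cs : {set V}) (mu : R) : rho Cs < mu ->
  exists K, forall k x y, x \in Cs -> y \in Cs -> ((Q s r Cs k x y)%:R : R) <= K * mu ^+ k.
Proof.
move=> hmu.
have mu0 : 0 < mu by apply: le_lt_trans hmu; apply: rho_ge0.
have hz : forall z, z \in rts (Mc Cs) -> nc z < mu.
  by move=> z hz; apply: le_lt_trans (rho_root hz) hmu.
have := gelfand_any hz => hg.
have : forall p : 'I_#|Cs| * 'I_#|Cs|, exists K, forall k, nc (((Mc Cs) ^+ k) p.1 p.2) <= K * mu ^+ k.
  by move=> p; apply: hg.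
move=> /boolp.choice [Kf hKf].
exists (\sum_p `|Kf p|) => k x y xC yC.
rewrite -(enum_rankK_in xC xC) -(enum_rankK_in xC yC) -nc_Mc.
apply: le_trans (hKf (enum_rank_in xC x, enum_rank_in xC y) k) _.
apply: ler_wpM2r; first by rewrite exprn_ge0 // ltW.
apply: le_trans (ler_norm _) _.
rewrite (bigD1 (enum_rank_in xC x, enum_rank_in xC y)) //= lerDl.
by apply: sumr_ge0 => p _.
Qed.

Lemma sum_eq1R (Cs : {set V}) u : u \in Cs -> (\sum_(y in Cs) (u == y))%N = 1%N.
Proof.
move=> uC; rewrite (bigD1 u) //= eqxx big1 // => w /andP [_ /negbTE].
by rewrite eq_sym => ->.
Qed.

Lemma comp_lower u : let Cs := component s r u in
  exists2 x, x \in Cs & forall k, rho Cs ^+ k <= ((\sum_(y in Cs) Q s r Cs k x y)%N%:R : R).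
Proof.
move=> Cs.
have uC : u \in Cs by apply: comp_in.
have [h0|hn0] := eqVneq (rho Cs) 0.
  exists u => // -[|k]; first by rewrite expr0 sum_eq1R.
  by rewrite h0 expr0n /= ler0n.
have [z zin ez] := rho_att hn0.
have [i hi] := eig_lower_any zin.
exists (enum_val i); first exact: enum_valP.
move=> k; rewrite -ez; apply: le_trans (hi k) _.
rewrite natr_sum [X in _ <= X]big_enum_val /=.
by rewrite le_eqVlt; apply/orP; left; apply/eqP; apply: eq_bigr => j _; rewrite nc_Mc.
Qed.

Lemma comp_int u : rho (component s r u) < 1 -> rho (component s r u) = 0.
Proof.
set Cs := component s r u => h1.
apply/eqP; apply/negPn/negP => hn0.
have rpos : 0 < rho Cs by rewrite lt_neqAle eq_sym hn0 rho_ge0.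
have [x xC hx] := comp_lower u; rewrite -/Cs in xC hx.
pose mu := (1 + rho Cs) / 2.
have hmu : rho Cs < mu by rewrite /mu; lra.
have hmu1 : mu < 1 by rewrite /mu; lra.
have mu0 : 0 < mu by rewrite /mu; lra.
have [K hK] := comp_upper hmu.
have hS : forall k, 1 <= (#|Cs|%:R * K) * mu ^+ k.
  move=> k.
  have h1k : (1 : R) <= ((\sum_(y in Cs) Q s r Cs k x y)%N%:R).
    rewrite ler1n lt0n; apply/negP => /eqP e.
    have := hx k; rewrite e => h; have := exprn_gt0 k rpos; lra.
  apply: le_trans h1k _; rewrite natr_sum.
  apply: le_trans (ler_sum _ (fun y yC => hK k x y xC yC)) _.
  by rewrite sumr_const -mulrA mulr_natl.
have c1 : 1 <= #|Cs|%:R * K by have := hS 0%N; rewrite expr0 mulr1.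
have c0 : 0 < #|Cs|%:R * K by apply: lt_le_trans c1; apply: ltr01.
have hmu' : `|mu| < 1 by rewrite ger0_norm ?ltW.
have ec : 0 < 1 / (#|Cs|%:R * K) by rewrite divr_gt0.
have := (cvgrPdist_lt (fun k => mu ^+ k) 0).1 (cvg_expr hmu') _ ec.
case=> N _ hN.
have := hN N (leqnn N); rewrite /= sub0r normrN ger0_norm ?exprn_ge0 ?ltW //.
rewrite ltr_pdivlMr // => h.
have := hS N; lra.
Qed.


Lemma geo_sum (x y : R) k : 0 <= x -> x < y ->
  \sum_(j < k) x ^+ j * y ^+ (k.-1 - j) <= y ^+ k / (y - x).
Proof.
move=> x0 xy; have yx : 0 < y - x by rewrite subr_gt0.
rewrite ler_pdivlMr //.
have := subrXX y x k => e.
have -> : (\sum_(j < k) x ^+ j * y ^+ (k.-1 - j)) * (y - x) = y ^+ k - x ^+ k.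
  by rewrite e mulrC; congr (_ * _); apply: eq_bigr => j _; rewrite mulrC.
by rewrite lerBlDr lerDl exprn_ge0.
Qed.

Definition lam v := \big[Num.max/0]_(w | reach s r v w) rho (component s r w).

Lemma rho_le_lam v w : reach s r v w -> rho (component s r w) <= lam v.
Proof. by move=> h; apply: (le_bigmax_cond _ _ h). Qed.

Lemma lam_ge0 v : 0 <= lam v.
Proof. by apply: le_trans (rho_ge0 _) (rho_le_lam (reach_refl s r v)). Qed.

Lemma lam_mono v w : reach s r v w -> lam w <= lam v.
Proof.
move=> h; apply: bigmax_le; first exact: lam_ge0.
by move=> x hx; apply: rho_le_lam; apply: reach_trans h hx.
Qed.

Lemma comp_reach v u : u \in component s r v -> reach s r v u.
Proof. by rewrite inE => /andP []. Qed.


Lemma P_upper n : forall v, (#|[set w | reach s r v w]| <= n)%N ->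
  forall mu, lam v < mu -> exists K, forall k, ((P s r k v)%:R : R) <= K * mu ^+ k.
Proof.
elim: n => [|n IH] v hcard mu hmu.
  have : (0 < #|[set w | reach s r v w]|)%N.
    by apply/card_gt0P; exists v; rewrite inE reach_refl.
  by rewrite leqNgt in hcard; rewrite (negbTE hcard).
set Cs := component s r v.
have vC : v \in Cs by apply: comp_in.
have l0 := lam_ge0 v.
have rC : rho Cs <= lam v by apply: rho_le_lam; apply: reach_refl.
pose mu1 := (lam v + mu) / 2.
have h1 : rho Cs < mu1 by rewrite /mu1; lra.
have h2 : mu1 < mu by rewrite /mu1; lra.
have h3 : 0 <= mu1 by rewrite /mu1; lra.
have mu0 : 0 < mu by lra.
have [K1 hK1] := comp_upper h1.
have K10 : 0 <= K1.
  by have := hK1 0%N v v vC vC; rewrite /= eqxx expr0 mulr1; apply: le_trans.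
have hf : forall f : E, exists K, 0 <= K /\
    (reach s r v (r f) && (r f \notin Cs) -> forall k, ((P s r k (r f))%:R : R) <= K * mu ^+ k).
  move=> f; case: (boolP (reach s r v (r f) && (r f \notin Cs))); last first.
    by move=> hn; exists 0; split => // /(negP hn).
  move=> /andP [hvf hfC].
  have hprop : [set w | reach s r (r f) w] \proper [set w | reach s r v w].
    apply/properP; split.
      by apply/fintype.subsetP => w; rewrite !inE => h; apply: reach_trans hvf h.
    exists v; rewrite !inE ?reach_refl //.
    by apply: contra hfC => hfv; rewrite inE hvf hfv.
  have hc : (#|[set w | reach s r (r f) w]| <= n)%N.
    by have := proper_card hprop; move: hcard; clear; lia.
  have [K hK] := IH (r f) hc mu (le_lt_trans (lam_mono hvf) hmu).
  exists `|K|; split => // _ k; apply: le_trans (hK k) _.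
  by apply: ler_wpM2r; [rewrite exprn_ge0 // ltW | apply: ler_norm].
have [Kf hKf] := boolp.choice hf.
pose K2 := \sum_f Kf f.
have Kf_le : forall f, Kf f <= K2.
  move=> f; rewrite /K2 (bigD1 f) //= lerDl; apply: sumr_ge0 => g _.
  by case: (hKf g).
have K20 : 0 <= K2 by apply: sumr_ge0 => g _; case: (hKf g).
have hX : forall m u, u \in Cs -> ((X s r Cs m u)%:R : R) <= #|E|%:R * K2 * mu ^+ m.
  move=> m u uC; rewrite /X natr_sum.
  have -> : #|E|%:R * K2 * mu ^+ m = \sum_(f : E) K2 * mu ^+ m.
    by rewrite sumr_const -mulrA mulr_natl.
  rewrite [X in _ <= X](bigID (fun f => (s f == u) && (r f \notin Cs))) /=.
  rewrite -[X in X <= _]addr0; apply: lerD; last first.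
    by apply: sumr_ge0 => f _; rewrite mulr_ge0 // exprn_ge0 // ltW.
  apply: ler_sum => f /andP [/eqP sf rfC].
  have hvf : reach s r v (r f).
    by apply: reach_trans (comp_reach uC) _; rewrite -sf; apply: reach_edge.
  case: (hKf f) => _ /(_ (introT andP (conj hvf rfC)) m) h.
  by apply: le_trans h _; apply: ler_wpM2r; [rewrite exprn_ge0 // ltW | exact: Kf_le].
exists (#|V|%:R * K1 + #|V|%:R * K1 * (#|E|%:R * K2) / (mu - mu1)) => k.
rewrite (exit_dec s r Cs k v) natrD mulrDl.
apply: lerD.
  rewrite natr_sum.
  have -> : #|V|%:R * K1 * mu ^+ k = \sum_(u : V) K1 * mu ^+ k.
    by rewrite sumr_const -mulrA mulr_natl.
  apply: ler_sum => u _.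
  case: (boolP (u \in Cs)) => uC.
    have hq := hK1 k v u vC uC.
    apply: le_trans hq _; apply: ler_wpM2l => //.
    rewrite lerXn2r ?nnegrE //; lra.
  by rewrite (Q_out _ _ _ vC uC) mulr_ge0 // exprn_ge0 // ltW.
rewrite natr_sum.
apply: le_trans (_ : \sum_(j < k) #|V|%:R * K1 * (#|E|%:R * K2) * (mu1 ^+ j * mu ^+ (k.-1 - j)) <= _).
  apply: ler_sum => j _; rewrite natr_sum.
  have -> : #|V|%:R * K1 * (#|E|%:R * K2) * (mu1 ^+ j * mu ^+ (k.-1 - j)) =
     \sum_(u : V) (K1 * mu1 ^+ j) * (#|E|%:R * K2 * mu ^+ (k.-1 - j)).
    rewrite sumr_const -mulr_natl; ring.
  apply: ler_sum => u _; rewrite natrM.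
  case: (boolP (u \in Cs)) => uC.
    apply: ler_pM; [exact: ler0n | exact: ler0n | exact: hK1 | exact: hX].
  rewrite (Q_out _ _ _ vC uC) mul0r.
  by rewrite mulr_ge0 // mulr_ge0 // ?mulr_ge0 // ?exprn_ge0 // ltW.
rewrite -mulr_sumr.
have c0 : 0 <= #|V|%:R * K1 * (#|E|%:R * K2) by rewrite !mulr_ge0.
apply: le_trans (ler_wpM2l c0 (geo_sum k h3 h2)) _.
rewrite le_eqVlt; apply/orP; left; apply/eqP; field.
by rewrite subr_eq0 gt_eqF.
Qed.

End Comp.
Section Lim.
Variable R : realType.

Lemma small_ev (a e : R) : 0 < e -> exists N, forall k, (N <= k)%N -> a <= e * k%:R.
Proof.
move=> e0; exists (Num.truncn (a / e)).+1 => k hk.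
have h1 := truncnS_gt (a / e).
have h2 : ((Num.truncn (a / e)).+1%:R : R) <= k%:R by rewrite ler_nat.
rewrite mulrC -ler_pdivrMr //; lra.
Qed.

Lemma conv_main (w : nat -> R) (L c : R) (d : nat) :
  (forall k, 0 <= w k) -> 0 <= L ->
  (forall e, 0 < e -> exists K, forall k, w k <= K * expR (L + e) ^+ k) ->
  0 < c -> (forall k, (d <= k)%N -> w k != 0 -> c * expR L ^+ (k - d) <= w k) ->
  (forall k, (d <= k)%N -> w k = 0 -> L = 0) ->
  ((fun k => (k%:R)^-1 * ln (w k)) @ \oo --> L)%classic.
Proof.
move=> w0 L0 hup c0 hlo hz.
apply/cvgrPdist_le => e e0.
have e20 : 0 < e / 2 by rewrite divr_gt0.
have [K hK] := hup _ e20.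
pose K' : R := `|K| + 1.
have K'1 : 1 <= K' by rewrite /K' lerDr.
have K'0 : 0 < K' by lra.
have mu0 : 0 < expR (L + e / 2) by apply: expR_gt0.
have hw : forall k, w k <= K' * expR (L + e / 2) ^+ k.
  move=> k; apply: le_trans (hK k) _; apply: ler_wpM2r; first by rewrite exprn_ge0 // ltW.
  by rewrite /K'; apply: le_trans (ler_norm _) _; rewrite lerDl.
have [N1 hN1] := small_ev (ln K') e20.
have [N2 hN2] := small_ev (d%:R * L - ln c) e0.
exists (maxn (maxn N1 N2) (maxn d 1)) => // k /= hk.
have k1 : (1 <= k)%N by move: hk; clear; lia.
have kd : (d <= k)%N by move: hk; clear; lia.
have kN1 : (N1 <= k)%N by move: hk; clear; lia.
have kN2 : (N2 <= k)%N by move: hk; clear; lia.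
have kpos : (0 : R) < k%:R by rewrite ltr0n.
have kne : (k%:R : R) != 0 by rewrite gt_eqF.
have up : ln (w k) <= (L + e) * k%:R.
  have [->|wn0] := eqVneq (w k) 0.
    by rewrite ln0 // mulr_ge0 // ?ler0n //; lra.
  have wpos : 0 < w k by rewrite lt_neqAle eq_sym wn0 w0.
  apply: le_trans (_ : ln (K' * expR (L + e / 2) ^+ k) <= _).
    by rewrite ler_ln ?posrE ?mulr_gt0 ?exprn_gt0 // hw.
  rewrite lnM ?posrE ?exprn_gt0 // lnXn // expRK.
  have := hN1 k kN1; rewrite -mulr_natr; lra.
have lo : (L - e) * k%:R <= ln (w k).
  have [wz|wn0] := eqVneq (w k) 0.
    by rewrite wz ln0 // (hz k kd wz) sub0r mulNr oppr_le0 mulr_ge0 ?ler0n // ltW.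
  have h := hlo k kd wn0.
  have pos : 0 < c * expR L ^+ (k - d) by rewrite mulr_gt0 // exprn_gt0 // expR_gt0.
  apply: le_trans (_ : ln (c * expR L ^+ (k - d)) <= _); last first.
    by rewrite ler_ln ?posrE // (lt_le_trans pos h).
  rewrite lnM ?posrE ?exprn_gt0 ?expR_gt0 // lnXn ?expR_gt0 // expRK.
  have -> : L *+ (k - d) = L * (k%:R - d%:R) by rewrite -natrB // mulr_natr.
  have := hN2 k kN2; lra.
have kinv : (0 : R) <= (k%:R)^-1 by rewrite invr_ge0 ler0n.
have ux : (k%:R)^-1 * ln (w k) <= L + e.
  apply: le_trans (ler_wpM2l kinv up) _.
  by rewrite mulrC mulfK.
have lx : L - e <= (k%:R)^-1 * ln (w k).
  apply: le_trans (ler_wpM2l kinv lo).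
  by rewrite mulrC mulfK.
by rewrite ler_norml; apply/andP; split; lra.
Qed.
End Lim.

Section Final.
Variables (R : realType) (V E : finType) (s r : E -> V) (t : V -> R).
Hypothesis t0 : forall v, 0 <= t v.
Hypothesis t1 : \sum_v t v = 1.

Lemma t_le1 v : t v <= 1.
Proof. by rewrite -t1 (bigD1 v) //= lerDl sumr_ge0. Qed.

Lemma ws_ge0 k : 0 <= word_sum s r t k.
Proof. by rewrite ws_P; apply: sumr_ge0 => v _; rewrite mulr_ge0 ?ler0n. Qed.

Definition cmin := \big[Num.min/1]_(v | t v != 0) t v.

Lemma cmin_gt0 : 0 < cmin.
Proof.
apply: lt_bigmin => [|v hv]; first exact: ltr01.
by rewrite lt_neqAle eq_sym hv t0.
Qed.

Lemma cmin_le v : t v != 0 -> cmin <= t v.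
Proof. by move=> hv; apply: bigmin_le_cond. Qed.

Lemma ws_pos k : word_sum s r t k != 0 -> cmin <= word_sum s r t k.
Proof.
rewrite ws_P; case: (pickP (fun v => t v * (P s r k v)%:R != 0)) => [v hv|hn]; last first.
  by rewrite big1 ?eqxx // => v _; have := hn v => /negbFE /eqP.
move=> _; rewrite (bigD1 v) //=.
apply: le_trans (_ : t v * (P s r k v)%:R <= _); last first.
  by rewrite lerDl sumr_ge0 // => w _; rewrite mulr_ge0 ?ler0n.
have tv : t v != 0 by apply: contra hv => /eqP ->; rewrite mul0r.
have pv : (P s r k v != 0)%N by apply: contra hv => /eqP ->; rewrite mulr0.
apply: le_trans (cmin_le tv) _.
rewrite -[X in X <= _]mulr1 ler_wpM2l // ler1n lt0n //.
Qed.

Definition good u := [exists v, (t v != 0) && communicated s r (component s r u) v].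

Lemma good_comp v w : t v != 0 -> reach s r v w -> good w.
Proof.
move=> tv hvw; apply/existsP; exists v; rewrite tv /=.
by apply/existsP; exists w; rewrite comp_in hvw.
Qed.

Lemma upper_ws (rs : R) :
  (forall u, good u -> rho R s r (component s r u) <= rs) -> 0 <= rs ->
  forall mu, rs < mu -> exists K, forall k, word_sum s r t k <= K * mu ^+ k.
Proof.
move=> hmax rs0 mu hmu.
have mu0 : 0 < mu by apply: le_lt_trans hmu.
have hf : forall v, exists K, 0 <= K /\ (t v != 0 -> forall k, ((P s r k v)%:R : R) <= K * mu ^+ k).
  move=> v; case: (boolP (t v != 0)) => tv; last by exists 0; split => // /(negP tv).
  have hl : lam R s r v < mu.
    apply: le_lt_trans hmu; apply: bigmax_le => // w hw.
    by apply: hmax; apply: good_comp tv hw.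
  have [K hK] := P_upper (leqnn _) hl.
  exists `|K|; split => // _ k; apply: le_trans (hK k) _.
  by apply: ler_wpM2r; [rewrite exprn_ge0 // ltW | apply: ler_norm].
have [Kf hKf] := boolp.choice hf.
exists (\sum_v Kf v) => k; rewrite ws_P mulr_suml.
apply: ler_sum => v _.
case: (boolP (t v != 0)) => tv.
  case: (hKf v) => _ /(_ tv k) h.
  apply: le_trans h; apply: le_trans (_ : 1 * (P s r k v)%:R <= _); last by rewrite mul1r.
  by apply: ler_wpM2r; [apply: ler0n | apply: t_le1].
move/negPn/eqP: tv => ->; rewrite mul0r; apply: mulr_ge0; [by case: (hKf v) | by rewrite exprn_ge0 // ltW].
Qed.

Lemma lower_ws us : good us ->
  exists c, 0 < c /\ exists d, forall k,
    c * rho R s r (component s r us) ^+ k <= word_sum s r t (d + k).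
Proof.
move=> /existsP [v1 /andP [tv1 /existsP [w /andP [wC hvw]]]].
have [x xC hx] := comp_lower R s r us.
have hrx : reach s r v1 x.
  apply: reach_trans hvw _; apply: reach_trans (_ : reach s r w us) _.
    by move: wC; rewrite inE => /andP [].
  exact: comp_reach xC.
have [d hd] := P_reach hrx.
exists (t v1); split; first by rewrite lt_neqAle eq_sym tv1 t0.
exists d => k; rewrite ws_P (bigD1 v1) //=.
apply: le_trans (_ : t v1 * (P s r (d + k) v1)%:R <= _); last first.
  by rewrite lerDl sumr_ge0 // => w' _; rewrite mulr_ge0 ?ler0n.
apply: ler_wpM2l => //; apply: le_trans (hx k) _; rewrite ler_nat.
apply: leq_trans (hd k); apply: leq_trans (@Q_le_P _ _ s r (component s r us) k x).
by rewrite [X in (_ <= X)%N](bigID (fun y => y \in component s r us)) /= leq_addr.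
Qed.

End Final.

Theorem proposition8p6 (R : realType) (V E : finType) (s r : E -> V)
    (t : V -> R) :
  is_prob_vector t ->
  exists2 u : V,
    [exists v, (t v != 0) && communicated s r (component s r u) v] &
    entropy s r t = (ln (spectral_radius (@sub_adj R V E s r (component s r u))))%:E /\
    (forall u' : V,
      [exists v, (t v != 0) && communicated s r (component s r u') v] ->
      ln (spectral_radius (@sub_adj R V E s r (component s r u')))
        <= ln (spectral_radius (@sub_adj R V E s r (component s r u)))).
Proof.
move=> [t0 t1].
have [v0 hv0] : exists v0, t v0 != 0.
  case: (pickP (fun v => t v != 0)) => [v0 h|h]; first by exists v0.
  move: t1; rewrite big1 => [/eqP|v _]; first by rewrite eq_sym oner_eq0.
  by have := h v => /negbFE /eqP.
have gv0 : good s r t v0 by apply: (good_comp hv0); apply: reach_refl.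
pose us := [arg max_(u > v0 | good s r t u) rho R s r (component s r u)]%O.
have [gus usmax] : good s r t us /\
    (forall u, good s r t u -> rho R s r (component s r u) <= rho R s r (component s r us)).
  by rewrite /us; case: arg_maxP => // i gi hi; split=> // u gu; apply: hi.
have rhoD : forall Cs, spectral_radius (sub_adj R s r Cs) = rho R s r Cs by [].
have hint : forall u, rho R s r (component s r u) = 0 \/ 1 <= rho R s r (component s r u).
  move=> u; case: (ltP (rho R s r (component s r u)) 1) => h; last by right.
  by left; apply: comp_int.
set rs := rho R s r (component s r us).
have rs0 : 0 <= rs by apply: rho_ge0.
exists us => //; rewrite !rhoD -/rs; split; last first.
  move=> u' gu'; have hle := usmax u' gu'; rewrite rhoD.
  case: (hint u') => [->|h1].
    rewrite ln0 //; case: (hint us) => h; rewrite -/rs in h; first by rewrite h ln0.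
    exact: ln_ge0.
  by rewrite ler_ln ?posrE // (lt_le_trans ltr01) // (le_trans h1).
have hup := upper_ws t0 t1 usmax rs0.
have hx : ((fun k => (k%:R)^-1 * ln (word_sum s r t k)) @ \oo --> ln rs)%classic.
  case: (hint us) => [hr0|hr1].
    rewrite -/rs in hr0; rewrite hr0 ln0 //.
    apply: (@conv_main _ _ 0 (cmin t) 0%N).
    - exact: ws_ge0.
    - by [].
    - move=> e e0; apply: hup; rewrite -/rs hr0 add0r; exact: expR_gt0.
    - exact: cmin_gt0.
    - by move=> k _ hk; rewrite expR0 expr1n mulr1; apply: ws_pos.
    - by [].
  rewrite -/rs in hr1.
  have rpos : 0 < rs by apply: lt_le_trans hr1; apply: ltr01.
  have [c [c0 [d hd]]] := lower_ws t0 gus.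
  apply: (@conv_main _ _ (ln rs) c d).
  - exact: ws_ge0.
  - exact: ln_ge0.
  - move=> e e0; apply: hup.
    by rewrite -/rs -{1}(lnK (x:=rs)) ?posrE // ltr_expR ltrDl.
  - exact: c0.
  - move=> k kd _; rewrite lnK ?posrE // -{2}(subnKC kd); exact: hd.
  - move=> k kd wz; have := hd (k - d)%N; rewrite (subnKC kd) wz.
    by move=> h; have := mulr_gt0 c0 (exprn_gt0 (k - d) rpos); rewrite ltNge h.
rewrite /entropy.
have := cvg_limn_einf_sup (u := fun k => ((k%:R)^-1 * ln (word_sum s r t k))%:E) (l := (ln rs)%:E).
move=> h; apply: (h _).2.
apply/fine_cvgP; split; first by apply: nearW.
exact: hx.
Qed.
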